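(* For every instance of the single-processor carbon-aware scheduling problem that admits a valid schedule, there exists an optimal (minimum carbon cost) valid schedule that is an $\mathcal{E}$-schedule, i.e., in which every block starts or ends at a time belonging to $\mathcal{E}=\{b_1=0,e_1=b_2,\dots,e_{J-1}=b_J,e_J=T\}$.
   Context: Single-processor carbon-aware scheduling problem. All quantities are nonnegative integers. One processor must execute tasks $v_1,\dots,v_n$ in this fixed order; task $v_i$ has duration $\omega(v_i)\ge 1$. The horizon $[0,T)$ is partitioned into $J$ consecutive intervals $I_j=[b_j,e_j)$, $1\le j\le J$, with $b_1=0$, $e_j=b_{j+1}$, $e_J=T$, each with a constant green power budget $\mathcal{G}_j\ge 0$ per time unit. The processor consumes idle power $P_{\mathrm{idle}}$ at every time unit, plus working power $P_{\mathrm{work}}$ at every time unit during which it executes a task. A (valid) schedule is an assignment of integer start times $\sigma(v_i)$ with $\sigma(v_1)\ge 0$, $\sigma(v_{i+1})\ge \sigma(v_i)+\omega(v_i)$ for $1\le i<n$, and $\sigma(v_n)+\omega(v_n)\le T$. The processor is active at integer time $t$ iff $\sigma(v_i)\le t<\sigma(v_i)+\omega(v_i)$ for some $i$; the power at $t$ is $\mathcal{P}(t)=P_{\mathrm{idle}}+P_{\mathrm{work}}$ if active and $P_{\mathrm{idle}}$ otherwise. The total carbon cost is $\mathcal{CC}=\sum_{t=0}^{T-1}\max(\mathcal{P}(t)-\mathcal{G}_{j(t)},0)$, where $t\in I_{j(t)}$. A block of a schedule is a maximal set of consecutive tasks $v_r,\dots,v_s$ ($r\le s$) executed without idle time between them,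 i.e., $\sigma(v_{i+1})=\sigma(v_i)+\omega(v_i)$ for $r\le i<s$, with idle time (or the horizon boundary) immediately before $v_r$ and immediately after $v_s$. A block starts at $\sigma(v_r)$ and ends at $\sigma(v_s)+\omega(v_s)$. *)

(* Defs.v *)
From mathcomp Require Import all_boot.
Set Implicit Arguments. Unset Strict Implicit. Unset Printing Implicit Defensive.

(* Tasks are indexed 0..n-1 (v_{i+1} is task i), durations w : nat -> nat.
   Intervals are indexed 0..J-1: I_j = [b j, b (j+1)), so b 0 = 0 and b J = T;
   G j is the green power budget of interval j.
   A schedule is sig : nat -> nat (sig i = start time of task i; values for
   i >= n are irrelevant). *)

Definition instance_ok (n : nat) (w : nat -> nat) (J : nat) (b : nat -> nat)
    (T : nat) : Prop :=
  (forall i, i < n -> 1 <= w i) /\ 1 <= J /\ b 0 = 0 /\ b J = T /\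
  (forall j, j < J -> b j < b j.+1).

Definition valid (n : nat) (w : nat -> nat) (T : nat) (sig : nat -> nat) : Prop :=
  (forall i, i.+1 < n -> sig i + w i <= sig i.+1) /\
  (0 < n -> sig n.-1 + w n.-1 <= T).

Definition active (n : nat) (w : nat -> nat) (sig : nat -> nat) (t : nat) : bool :=
  has (fun i => (sig i <= t) && (t < sig i + w i)) (iota 0 n).

Definition power (n : nat) (w : nat -> nat) (Pidle Pwork : nat)
    (sig : nat -> nat) (t : nat) : nat :=
  if active n w sig t then Pidle + Pwork else Pidle.

(* total carbon cost: sum over t in [0,T) of max(P(t) - G_{j(t)}, 0),
   grouped by interval (truncated subtraction = max(_,0)) *)
Definition carbon_cost (n : nat) (w : nat -> nat) (J : nat) (b : nat -> nat)
    (G : nat -> nat) (Pidle Pwork : nat) (sig : nat -> nat) : nat :=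
  \sum_(j < J) \sum_(b j <= t < b j.+1) (power n w Pidle Pwork sig t - G j).

Definition is_block (n : nat) (w : nat -> nat) (sig : nat -> nat) (r s : nat) : Prop :=
  r <= s /\ s < n /\
  (forall i, r <= i -> i < s -> sig i.+1 = sig i + w i) /\
  (r = 0 \/ sig r.-1 + w r.-1 < sig r) /\
  (s = n.-1 \/ sig s + w s < sig s.+1).

Definition in_E (J : nat) (b : nat -> nat) (x : nat) : Prop :=
  exists j, j <= J /\ x = b j.

Definition E_schedule (n : nat) (w : nat -> nat) (J : nat) (b : nat -> nat)
    (sig : nat -> nat) : Prop :=
  forall r s, is_block n w sig r s ->
    in_E J b (sig r) \/ in_E J b (sig s + w s).

(* Main.v *)
Require Import Defs.
From mathcomp Require Import all_boot zify.
From Stdlib Require Import Classical.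
Set Implicit Arguments. Unset Strict Implicit.

Lemma exists_min {X : Type} (P : X -> Prop) (f : X -> nat) :
  (exists x, P x) -> exists x, P x /\ forall y, P y -> f x <= f y.
Proof.
move=> [x Px]; move: {2}(f x) (leqnn (f x)) => k.
elim: k x Px => [|k IH] x Px hk.
  exists x; split=> // y _; lia.
case: (classic (exists y, P y /\ f y < f x)) => [[y [Py hy]]|hn].
  apply: (IH y Py); lia.
exists x; split=> // y Py; case: (leqP (f x) (f y)) => // hlt.
by exfalso; apply: hn; exists y.
Qed.

Lemma bmono (J : nat) (b : nat -> nat) :
  (forall j, j < J -> b j < b j.+1) -> forall i k, i <= k -> k <= J -> b i <= b k.
Proof.
move=> hb i k hik; elim: k hik => [|k IH] hik hk.
  by have -> : i = 0 by lia.
case: (eqVneq i k.+1) => [->//|ne].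
have := hb k hk; have := IH ltac:(lia) ltac:(lia); lia.
Qed.

Lemma split_sum (J : nat) (b : nat -> nat) (H : nat -> nat -> nat) j1 t1 :
  j1 < J -> b j1 <= t1 < b j1.+1 ->
  (forall j, j < J -> b j < b j.+1) ->
  \sum_(j < J) \sum_(b j <= t < b j.+1) H j t =
  \sum_(j < J) \sum_(b j <= t < b j.+1) (if t == t1 then 0 else H j t) + H j1 t1.
Proof.
move=> hj ht hb.
have e : forall j : 'I_J, \sum_(b j <= t < b j.+1) H j t =
   \sum_(b j <= t < b j.+1) (if t == t1 then 0 else H j t) +
   (if b j <= t1 < b j.+1 then H j t1 else 0).
  move=> j; rewrite -(@big_nat1_eq _ 0 addn (H j) t1) big_mkcond /= -big_split /=.
  by apply: eq_bigr => t _; case: eqP => [->|]; rewrite ?addn0.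
rewrite (eq_bigr _ (fun j _ => e j)) big_split /=; congr (_ + _).
rewrite (bigD1 (Ordinal hj)) //= ht big1 ?addn0 // => j hne.
case: ifP => // /andP[h1 h2].
have ne : val j != j1 by apply: contraNneq hne => h; apply/eqP/val_inj.
case: (ltngtP (val j) j1) => [lt|gt|eq]; last by rewrite eq eqxx in ne.
  have := bmono hb (i:=j.+1) (k:=j1) lt (ltnW hj); lia.
have := bmono hb (i:=j1.+1) (k:=j) gt (ltnW (ltn_ord j)); lia.
Qed.

Lemma point (J : nat) (b : nat -> nat) (F F' : nat -> nat -> nat) j1 t1 :
  j1 < J -> b j1 <= t1 < b j1.+1 ->
  (forall j, j < J -> b j < b j.+1) ->
  (forall j t, t != t1 -> F j t = F' j t) ->
  \sum_(j < J) \sum_(b j <= t < b j.+1) F' j t + F j1 t1 =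
  \sum_(j < J) \sum_(b j <= t < b j.+1) F j t + F' j1 t1.
Proof.
move=> hj ht hb he.
rewrite (split_sum F' hj ht hb) (split_sum F hj ht hb).
have -> : \sum_(j < J) \sum_(b j <= t < b j.+1) (if t == t1 then 0 else F' j t)
  = \sum_(j < J) \sum_(b j <= t < b j.+1) (if t == t1 then 0 else F j t).
  apply: eq_bigr => j _; apply: eq_bigr => t _; case: eqP => // /eqP ne.
  by rewrite he.
lia.
Qed.

Lemma bool_eq (x y : bool) : (x -> y) -> (y -> x) -> x = y.
Proof. by case: x; case: y => // h1 h2; [have := h1 isT | have := h2 isT]. Qed.

Lemma vmono n w T sig : valid n w T sig ->
  forall i k, i < k -> k < n -> sig i + w i <= sig k.
Proof.
move=> [hv _] i k hik; elim: k hik => [//|k IH] hik hk.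
case: (eqVneq i k) => [->|ne]; first by apply: hv.
have := IH ltac:(lia) ltac:(lia); have := hv k hk; lia.
Qed.

Lemma chain_le f w r k : (forall i, r <= i -> i < r + k -> f i.+1 = f i + w i) ->
  f r <= f (r + k).
Proof.
elim: k => [|k IH] h; first by rewrite addn0.
have := IH (fun i h1 h2 => h i h1 ltac:(lia)).
have := h (r + k) ltac:(lia) ltac:(lia); rewrite addnS; lia.
Qed.

Lemma block_has f w r k t : (forall i, r <= i -> i < r + k -> f i.+1 = f i + w i) ->
  has (fun i => (f i <= t) && (t < f i + w i)) (iota r k.+1) =
  (f r <= t) && (t < f (r + k) + w (r + k)).
Proof.
elim: k => [|k IH] h; first by rewrite /= addn0 orbF.
rewrite (_ : k.+2 = k.+1 + 1); last by lia.
rewrite iotaD has_cat IH; last by move=> i h1 h2; apply: h; lia.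
have cl : f r <= f (r + k) by apply: chain_le => i h1 h2; apply: h; lia.
have e := h (r + k) ltac:(lia) ltac:(lia).
rewrite /= orbF addnS e.
apply: bool_eq.
  case/orP => /andP[h1 h2]; apply/andP; split; lia.
move=> /andP[h1 h2]; case: (ltnP t (f (r + k) + w (r + k))) => h3.
  by apply/orP; left; apply/andP; split.
by apply/orP; right; apply/andP; split.
Qed.

Definition Pf (w f : nat -> nat) (t : nat) := fun i => (f i <= t) && (t < f i + w i).

Lemma act_decomp n w f r s t :
  (forall i, r <= i -> i < s -> f i.+1 = f i + w i) -> r <= s -> s < n ->
  active n w f t = [|| has (Pf w f t) (iota 0 r), (f r <= t) && (t < f s + w s)
                     | has (Pf w f t) (iota s.+1 (n - s.+1))].
Proof.
move=> h hrs hsn; rewrite /active.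
have -> : n = r + ((s - r).+1 + (n - s.+1)) by lia.
rewrite iotaD iotaD !has_cat add0n.
rewrite (_ : r + (s - r).+1 = s.+1); last by lia.
rewrite (_ : r + ((s - r).+1 + (n - s.+1)) - s.+1 = n - s.+1); last by lia.
rewrite -/(Pf w f t) (block_has (k := s - r)); last by move=> i h1 h2; apply: h; lia.
by rewrite (_ : r + (s - r) = s); last by lia.
Qed.

Lemma locate (J : nat) (b : nat -> nat) x : b 0 = 0 -> x < b J ->
  exists j, j < J /\ b j <= x < b j.+1.
Proof.
move=> h0; elim: J => [|J IH] hx; first by rewrite h0 in hx.
case: (ltnP x (b J)) => h.
  by have [j [hj hj']] := IH h; exists j; split => //; lia.
by exists J; split => //; apply/andP.
Qed.

Definition pot (n : nat) (f : nat -> nat) := \sum_(i < n) f i.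

Definition costA (J : nat) (b G : nat -> nat) (Pi Pw : nat) (a : nat -> bool) :=
  \sum_(j < J) \sum_(b j <= t < b j.+1) ((if a t then Pi + Pw else Pi) - G j).

Lemma pot_lt n f g k : k < n -> (forall i, i < n -> f i <= g i) -> f k < g k -> pot n f < pot n g.
Proof.
move=> hk hle hlt; rewrite /pot [X in X < _](bigD1 (Ordinal hk)) //= [X in _ < X](bigD1 (Ordinal hk)) //=.
have : \sum_(i < n | i != Ordinal hk) f i <= \sum_(i < n | i != Ordinal hk) g i.
  by apply: leq_sum => i _; apply: hle.
move=> H; have := leq_add hlt H; by rewrite addSn.
Qed.

Lemma improve n w J b T G Pi Pw sig r s :
  instance_ok n w J b T -> valid n w T sig -> is_block n w sig r s ->
  ~ in_E J b (sig r) -> ~ in_E J b (sig s + w s) ->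
  exists sig', valid n w T sig' /\
   (carbon_cost n w J b G Pi Pw sig' < carbon_cost n w J b G Pi Pw sig \/
    (carbon_cost n w J b G Pi Pw sig' <= carbon_cost n w J b G Pi Pw sig /\
     pot n sig' < pot n sig)).
Proof.
move=> [hw [hJ [hb0 [hbJ hb]]]] hv [hrs [hsn [hch [hl hr]]]] nS nE.
set S := sig r in nS *; set E := sig s + w s in nE *.
have hS0 : 0 < S.
  case: (posnP S) => // h; exfalso; apply: nS; exists 0; split => //; lia.
have hws := hw s hsn.
have hge : forall i, r <= i -> i <= s -> S <= sig i.
  move=> i h1 h2; have := @chain_le sig w r (i - r).
  rewrite (_ : r + (i - r) = i); last by lia.
  apply=> k k1 k2; apply: hch; lia.
have hSs := hge s hrs (leqnn s).
have hET : E <= T.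
  case: (ltnP s n.-1) => h.
    have := vmono hv (i:=s) (k:=n.-1) h ltac:(lia); have := hv.2 ltac:(lia).
    rewrite /E; lia.
  rewrite /E; have -> : s = n.-1 by lia.
  exact: hv.2 ltac:(lia).
have hET' : E < T.
  case: (ltngtP E T) => // h; exfalso; apply: nE; exists J; split => //; lia.
have [j1 [hj1 hj1']] := locate (J := J) hb0 (x := S) ltac:(lia).
have hj1b : b j1 < S.
  case: (ltngtP (b j1) S) => //; first by lia.
  move=> h; exfalso; apply: nS; exists j1; split; [lia|done].
have [j2 [hj2 hj2']] := locate (J := J) hb0 (x := E) ltac:(lia).
have hj2b : b j2 < E.
  case: (ltngtP (b j2) E) => //; first by lia.
  move=> h; exfalso; apply: nE; exists j2; split; [lia|done].
have hO1 : forall t, S.-1 <= t -> has (Pf w sig t) (iota 0 r) = false.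
  move=> t ht; apply/hasPn => i; rewrite mem_iota add0n => /andP[_ hi].
  case: hl => [h0|hgap]; first by lia.
  rewrite /Pf; apply/negP => /andP[_ h2].
  case: (ltnP i r.-1) => h3.
    have := vmono hv (i:=i) (k:=r.-1) h3 ltac:(lia); rewrite -/S in hgap; lia.
  have e : i = r.-1 by lia.
  rewrite e in h2; rewrite -/S in hgap; lia.
have hO2 : forall t, t <= E -> has (Pf w sig t) (iota s.+1 (n - s.+1)) = false.
  move=> t ht; apply/hasPn => i; rewrite mem_iota => /andP[hi1 hi2].
  case: hr => [hn|hgap]; first by lia.
  rewrite /Pf; apply/negP => /andP[h1 _].
  case: (ltnP s.+1 i) => h3.
    have := vmono hv (i:=s.+1) (k:=i) h3 ltac:(lia); rewrite -/E in hgap; lia.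
  have e : i = s.+1 by lia.
  rewrite e in h1; rewrite -/E in hgap; lia.
have hdec : forall f, (forall i, i < r \/ s < i -> f i = sig i) ->
    (forall i, r <= i -> i < s -> f i.+1 = f i + w i) -> forall t,
    active n w f t = [|| has (Pf w sig t) (iota 0 r), (f r <= t) && (t < f s + w s)
                     | has (Pf w sig t) (iota s.+1 (n - s.+1))].
  move=> f hf hfc t; rewrite (act_decomp t hfc hrs hsn).
  congr (_ || (_ || _)); apply: eq_in_has => i; rewrite mem_iota => /andP[h1 h2];
    rewrite /Pf hf //; lia.
have hdecS := hdec sig (fun i _ => erefl) hch.
pose sigL i := if (r <= i) && (i <= s) then (sig i).-1 else sig i.
pose sigR i := if (r <= i) && (i <= s) then (sig i).+1 else sig i.
have hdecL : forall t, active n w sigL t = [|| has (Pf w sig t) (iota 0 r),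
     (S.-1 <= t) && (t < E.-1) | has (Pf w sig t) (iota s.+1 (n - s.+1))].
  move=> t; rewrite hdec.
  - rewrite /sigL (_ : (r <= r) && (r <= s) = true); last by lia.
    rewrite (_ : (r <= s) && (s <= s) = true); last by lia.
    by rewrite (_ : (sig s).-1 + w s = E.-1) //; rewrite /E; lia.
  - by move=> i hi; rewrite /sigL; case: ifP => //; lia.
  move=> i h1 h2; rewrite /sigL.
  rewrite (_ : (r <= i) && (i <= s) = true); last by lia.
  rewrite (_ : (r <= i.+1) && (i.+1 <= s) = true); last by lia.
  have := hch i h1 h2; have := hge i h1 ltac:(lia); lia.
have hdecR : forall t, active n w sigR t = [|| has (Pf w sig t) (iota 0 r),
     (S.+1 <= t) && (t < E.+1) | has (Pf w sig t) (iota s.+1 (n - s.+1))].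
  move=> t; rewrite hdec.
  - rewrite /sigR (_ : (r <= r) && (r <= s) = true); last by lia.
    by rewrite (_ : (r <= s) && (s <= s) = true); last by lia.
  - by move=> i hi; rewrite /sigR; case: ifP => //; lia.
  move=> i h1 h2; rewrite /sigR.
  rewrite (_ : (r <= i) && (i <= s) = true); last by lia.
  rewrite (_ : (r <= i.+1) && (i.+1 <= s) = true); last by lia.
  have := hch i h1 h2; lia.
have vL : valid n w T sigL.
  split.
    move=> i hi; have := hv.1 i hi; rewrite /sigL.
    case: ifP => h1; case: ifP => h2 //.
    - have := hge i ltac:(lia) ltac:(lia); lia.
    - have := hge i ltac:(lia) ltac:(lia); lia.
    - case: hl => [h0|hgap]; first by lia.
      have e' : i.+1 = r by lia.
      rewrite e'; have e : i = r.-1 by lia.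
      rewrite e; rewrite /S in hS0; lia.
  move=> hn; have := hv.2 hn; rewrite /sigL; case: ifP => //; lia.
have vR : valid n w T sigR.
  split.
    move=> i hi; have := hv.1 i hi; rewrite /sigR.
    case: ifP => h1; case: ifP => h2 //.
    - have e : i = s by lia.
      case: hr => [hn|hgap]; first by lia.
      rewrite e; rewrite -/E in hgap; lia.
    - lia.
  move=> hn; have := hv.2 hn; rewrite /sigR; case: ifP => // h.
  have e : s = n.-1.
    by case: hr => //; move=> hgap; lia.
  rewrite -e -/E; lia.
pose h j (x : bool) := (if x then Pi + Pw else Pi) - G j.
have cc : forall f, carbon_cost n w J b G Pi Pw f = costA J b G Pi Pw (active n w f).
  by [].
pose a := active n w sig.
pose a1 t := if t == S.-1 then true else a t.
pose a2 t := if t == S then false else a t.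
have eqL1 : costA J b G Pi Pw a1 + h j1 (a S.-1) = costA J b G Pi Pw a + h j1 (a1 S.-1).
  apply: (point (F := fun j t => h j (a t)) (F' := fun j t => h j (a1 t))) => //.
  - lia.
  - by move=> j t ht; rewrite /a1 (negbTE ht).
have eqL2 : costA J b G Pi Pw (active n w sigL) + h j2 (a1 E.-1) =
            costA J b G Pi Pw a1 + h j2 (active n w sigL E.-1).
  apply: (point (F := fun j t => h j (a1 t)) (F' := fun j t => h j (active n w sigL t))) => //.
  - lia.
  - move=> j t ht; congr (h j _); rewrite /a1 /a hdecL hdecS.
    case: eqP => [->|ne].
      by rewrite hO1 // hO2 /=; lia.
    congr (_ || (_ || _)); apply: bool_eq => /andP[u v]; apply/andP; split;
      move/eqP: ht; lia.
have eqR1 : costA J b G Pi Pw a2 + h j1 (a S) = costA J b G Pi Pw a + h j1 (a2 S).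
  apply: (point (F := fun j t => h j (a t)) (F' := fun j t => h j (a2 t))) => //.
  - by move=> j t ht; rewrite /a2 (negbTE ht).
have eqR2 : costA J b G Pi Pw (active n w sigR) + h j2 (a2 E) =
            costA J b G Pi Pw a2 + h j2 (active n w sigR E).
  apply: (point (F := fun j t => h j (a2 t)) (F' := fun j t => h j (active n w sigR t))) => //.
  - move=> j t ht; congr (h j _); rewrite /a2 /a hdecR hdecS.
    case: eqP => [->|ne].
      by rewrite hO1 ?hO2 /=; lia.
    congr (_ || (_ || _)); apply: bool_eq => /andP[u v]; apply/andP; split;
      move/eqP: ht; lia.
have va1 : a S.-1 = false by rewrite /a hdecS hO1 ?hO2 /=; lia.
have va2 : a1 S.-1 = true by rewrite /a1 eqxx.
have va3 : a1 E.-1 = true.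
  rewrite /a1 (_ : (E.-1 == S.-1) = false); last by lia.
  by rewrite /a hdecS (_ : (S <= E.-1) && (E.-1 < E)) ?orbT //; lia.
have va4 : active n w sigL E.-1 = false by rewrite hdecL hO1 ?hO2 /=; lia.
have vb1 : a S = true by rewrite /a hdecS (_ : (S <= S) && (S < E)) ?orbT //; lia.
have vb2 : a2 S = false by rewrite /a2 eqxx.
have vb3 : a2 E = false.
  rewrite /a2 (_ : (E == S) = false); last by lia.
  by rewrite /a hdecS hO1 ?hO2 /=; lia.
have vb4 : active n w sigR E = true.
  by rewrite hdecR (_ : (S.+1 <= E) && (E < E.+1)) ?orbT //; lia.
rewrite va1 va2 va3 va4 in eqL1 eqL2.
rewrite vb1 vb2 vb3 vb4 in eqR1 eqR2.
rewrite !cc -/a.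
case: (leqP (h j1 true + h j2 false) (h j2 true + h j1 false)) => hc.
  exists sigL; split => //; right; rewrite cc; split; first by lia.
  apply: (pot_lt (k := r)); first by lia.
    by move=> i _; rewrite /sigL; case: ifP => //; lia.
  by rewrite /sigL (_ : (r <= r) && (r <= s) = true) -?/S; lia.
exists sigR; split => //; left; rewrite cc; lia.
Qed.
Unset Implicit Arguments.

Theorem lemma1 (n : nat) (w : nat -> nat) (J : nat) (b : nat -> nat) (T : nat)
    (G : nat -> nat) (Pidle Pwork : nat) :
  instance_ok n w J b T ->
  (exists sig, valid n w T sig) ->
  exists sig, valid n w T sig /\
    (forall sig', valid n w T sig' ->
       carbon_cost n w J b G Pidle Pwork sig <= carbon_cost n w J b G Pidle Pwork sig') /\
    E_schedule n w J b sig.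
Proof.
move=> hinst hex.
have [sig0 [v0 m0]] := @exists_min _ (fun sig => valid n w T sig)
   (carbon_cost n w J b G Pidle Pwork) hex.
have [sig [[v e] m]] := @exists_min _
   (fun sig => valid n w T sig /\ carbon_cost n w J b G Pidle Pwork sig =
                                  carbon_cost n w J b G Pidle Pwork sig0)
   (pot n) (ex_intro _ sig0 (conj v0 erefl)).
exists sig; split => //; split.
  by move=> sig' v'; rewrite e; exact: m0.
move=> r s hbl; apply: NNPP => hn.
have [h1 h2] := not_or_and _ _ hn.
have [sig' [v' [lt | [le lt]]]] := improve G Pidle Pwork hinst v hbl h1 h2.
  have := m0 sig' v'; lia.
have e' : carbon_cost n w J b G Pidle Pwork sig' = carbon_cost n w J b G Pidle Pwork sig0.
  have := m0 sig' v'; lia.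
have := m sig' (conj v' e'); lia.
Qed.
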